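(* Let $p$ be a prime, $k$ even, and let $G=HN$ be the affine permutation group of degree $p^k$ with $N=\mathbb F_{p^k}$ acting by translations and $H=\mathrm{GL}_1(p^k)\langle\phi\rangle\le\Gamma\mathrm L_1(p^k)$, where $\phi$ is the field automorphism of $\mathbb F_{p^k}$ of order $2$. Then $G$ is a non-Frobenius $2$-transitive group and $\kappa(G)=2$.
   Context: A derangement is an element fixing no point; $\kappa(G)$ is the number of conjugacy classes of derangements. $\mathrm{GL}_1(p^k)=\mathbb F_{p^k}^\times$ acting by multiplication. *)

(* Defs.v *)
From HB Require Import structures.
From mathcomp Require Import all_boot all_order all_algebra all_fingroup all_field.
Set Implicit Arguments. Unset Strict Implicit. Unset Printing Implicit Defensive.
Import GRing.Theory.
Local Open Scope ring_scope.

Section Defs.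
Variable F : finFieldType.

Definition transl_set : {set {perm F}} :=
  [set g : {perm F} | [exists b : F, [forall x : F, g x == x + b]]].

Definition gl1_set : {set {perm F}} :=
  [set g : {perm F} | [exists a : F, (a != 0) && [forall x : F, g x == a * x]]].

Definition phi_set (p k : nat) : {set {perm F}} :=
  [set g : {perm F} | [forall x : F, g x == x ^+ (p ^ k./2)]].

Definition H_grp (p k : nat) : {group {perm F}} :=
  <<gl1_set :|: phi_set p k>>%G.

Definition G_grp (p k : nat) : {group {perm F}} :=
  <<(H_grp p k : {set {perm F}}) :|: transl_set>>%G.
End Defs.

Section PermDefs.
Variable T : finType.

Definition two_transitive (G : {set {perm T}}) : Prop :=
  forall x y u v : T, x != y -> u != v ->
    exists2 g, g \in G & g x = u /\ g y = v.

Definition frobenius_perm (G : {set {perm T}}) : Prop :=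
  [/\ forall x y : T, exists2 g, g \in G & g x = y,
      exists2 g, g \in G & (g != 1)%g /\ exists x, g x = x
    & forall g, g \in G -> g != 1%g ->
        forall x y : T, g x = x -> g y = y -> x = y].

Definition derangement (g : {perm T}) : bool := [forall x : T, g x != x].

Definition kappa (G : {group {perm T}}) : nat :=
  #|[set C in classes G | [forall g in C, derangement g]]|.
End PermDefs.

(* Main.v *)
Require Import Defs.
From HB Require Import structures.
From mathcomp Require Import all_boot all_order all_algebra all_fingroup all_field.
From mathcomp Require Import ring.
Set Implicit Arguments. Unset Strict Implicit. Unset Printing Implicit Defensive.
Import GRing.Theory.
Local Open Scope ring_scope.

Section Main.
Variables (F : finFieldType) (p k : nat).
Hypotheses (hp : prime p) (hk : ~~ odd k) (hF : #|F| = (p ^ k)%N).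
Local Notation r := (p ^ k./2)%N.

Lemma rr : (r * r)%N = #|F|.
Proof. by rewrite hF -expnD addnn -[in RHS](odd_double_half k) (negbTE hk). Qed.

Lemma r_gt1 : (1 < r)%N.
Proof.
have := finNzRing_gt1 F; rewrite hF.
rewrite -[in X in (_ < X)%N -> _](odd_double_half k) (negbTE hk) add0n.
case: (k./2) => [|m]; first by rewrite expn0.
by move=> _; rewrite expnS; apply: (leq_trans (prime_gt1 hp)); rewrite leq_pmulr // expn_gt0 prime_gt0.
Qed.

Lemma pcharF : p \in [pchar F].
Proof. exact: card_finPcharP hF hp. Qed.

Lemma frobD (x y : F) : (x + y) ^+ r = x ^+ r + y ^+ r.
Proof.
apply: exprDn_pchar; rewrite pnatX ?pnatE //.
by rewrite (card_finPcharP hF hp).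
Qed.

Lemma frob_r2 (x : F) : (x ^+ r) ^+ r = x.
Proof. by rewrite -exprM rr expf_card. Qed.


Lemma frobM (x y : F) : (x * y) ^+ r = x ^+ r * y ^+ r.
Proof. exact: exprMn. Qed.

Lemma frob0 : (0 : F) ^+ r = 0.
Proof. by rewrite expr0n expn_eq0 -[p == 0%N]negbK -lt0n prime_gt0. Qed.

Lemma frobN (x : F) : (- x) ^+ r = - x ^+ r.
Proof. by apply/eqP; rewrite -subr_eq0 opprK -frobD addNr frob0. Qed.

Lemma frobB (x y : F) : (x - y) ^+ r = x ^+ r - y ^+ r.
Proof. by rewrite frobD frobN. Qed.

Lemma frobV (x : F) : (x ^-1) ^+ r = (x ^+ r) ^-1.
Proof. exact: exprVn. Qed.

Lemma frob_eq0 (x : F) : (x ^+ r == 0) = (x == 0).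
Proof. by rewrite expf_eq0 expn_gt0 prime_gt0. Qed.

Lemma exists_nz (a : F) : exists t, t + a * t ^+ r != 0.
Proof.
have [->|a0] := eqVneq a 0; first by exists 1; rewrite mul0r addr0 oner_neq0.
case: (boolP [exists t, t + a * t ^+ r != 0]) => [/existsP//|/existsPn H]; exfalso.
pose P : {poly F} := a *: 'X^r + 'X.
have szP : size P = r.+1.
  by rewrite /P size_polyDl size_scale // ?size_polyXn // size_polyX ltnS r_gt1.
have P0 : P != 0 by rewrite -size_poly_gt0 szP.
have := max_poly_roots P0 _ (enum_uniq F).
rewrite szP -cardE -rr ltnS => /(_ _) H2.
have : (r * r <= r)%N.
  apply: H2; apply/allP=> x _; rewrite /root /P !hornerE.
  by have := H x; rewrite negbK addrC.
by rewrite leqNgt -{1}(muln1 r) ltn_mul2l r_gt1 (ltnW r_gt1).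
Qed.


Definition pw (s : bool) (x : F) := if s then x ^+ r else x.

Lemma pwD s x y : pw s (x + y) = pw s x + pw s y.
Proof. by case: s; rewrite /pw ?frobD. Qed.
Lemma pwM s x y : pw s (x * y) = pw s x * pw s y.
Proof. by case: s; rewrite /pw ?frobM. Qed.
Lemma pw0 s : pw s 0 = 0.
Proof. by case: s; rewrite /pw ?frob0. Qed.
Lemma pwK s t x : pw s (pw t x) = pw (s (+) t) x.
Proof. by case: s; case: t; rewrite /pw ?frob_r2. Qed.
Lemma pw_eq0 s x : (pw s x == 0) = (x == 0).
Proof. by case: s; rewrite /pw ?frob_eq0. Qed.

Definition Sset : {set {perm F}} :=
  [set g : {perm F} | [exists a : F, [exists b : F, [exists s : bool,
     (a != 0) && [forall x, g x == a * pw s x + b]]]]].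

Lemma SsetP g : g \in Sset -> exists a b s, a != 0 /\ forall x, g x = a * pw s x + b.
Proof.
rewrite inE => /existsP[a /existsP[b /existsP[s /andP[a0 /forallP H]]]].
by exists a, b, s; split=> // x; apply/eqP.
Qed.

Lemma SsetI (g : {perm F}) a b s : a != 0 -> (forall x, g x = a * pw s x + b) -> g \in Sset.
Proof.
move=> a0 H; rewrite inE; apply/existsP; exists a; apply/existsP; exists b.
by apply/existsP; exists s; rewrite a0 /=; apply/forallP=> x; rewrite H.
Qed.

Lemma group_Sset : group_set Sset.
Proof.
apply/group_setP; split.
  by apply: (@SsetI _ 1 0 false) => [|x]; rewrite ?oner_neq0 // perm1 mul1r addr0.
move=> g h /SsetP[a [b [s [a0 Hg]]]] /SsetP[a' [b' [s' [a0' Hh]]]].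
apply: (@SsetI _ (a' * pw s' a) (a' * pw s' b + b') (s' (+) s)).
  by rewrite mulf_neq0 // pw_eq0.
by move=> x; rewrite permM Hg Hh pwD pwM pwK mulrDr mulrA addrA.
Qed.

Definition Sgrp : {group {perm F}} := Group group_Sset.

Local Notation G := (G_grp F p k).

Lemma G_sub : G \subset Sset.
Proof.
rewrite /G_grp /= (gen_subG _ Sgrp) subUset; apply/andP; split.
  rewrite /H_grp /= (gen_subG _ Sgrp) subUset; apply/andP; split; apply/subsetP=> g.
    rewrite inE => /existsP[a /andP[a0 /forallP H]].
    by apply: (@SsetI _ a 0 false) => // x; rewrite addr0; apply/eqP.
  rewrite inE => /forallP H.
  by apply: (@SsetI _ 1 0 true) => [|x]; rewrite ?oner_neq0 // mul1r addr0; apply/eqP.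
apply/subsetP=> g; rewrite inE => /existsP[b /forallP H].
by apply: (@SsetI _ 1 b false) => [|x]; rewrite ?oner_neq0 // mul1r; apply/eqP.
Qed.

Lemma memG g : [|| g \in gl1_set F, g \in phi_set F p k | g \in transl_set F] -> g \in G.
Proof.
case/or3P=> H; apply: mem_gen; rewrite inE; apply/orP; [left|left|right] => //;
  apply: mem_gen; rewrite inE ?H ?orbT //.
Qed.


Lemma tr_inj (v : F) : injective (fun x => x + v).
Proof. exact: addIr. Qed.
Definition tr v : {perm F} := perm (@tr_inj v).
Lemma trE v x : tr v x = x + v.
Proof. by rewrite permE. Qed.

Definition unz (u : F) := if u == 0 then 1 else u.
Lemma unz_neq0 u : unz u != 0.
Proof. by rewrite /unz; case: (eqVneq u 0) => [_|//]; rewrite oner_neq0. Qed.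
Lemma unzE u : u != 0 -> unz u = u.
Proof. by rewrite /unz => /negbTE ->. Qed.
Lemma sc_inj (u : F) : injective (fun x => unz u * x).
Proof. exact/mulfI/unz_neq0. Qed.
Definition sc u : {perm F} := perm (@sc_inj u).
Lemma scE u x : u != 0 -> sc u x = u * x.
Proof. by move=> u0; rewrite permE unzE. Qed.

Lemma ph_inj : injective (fun x : F => x ^+ r).
Proof. by move=> x y /(congr1 (fun z => z ^+ r)); rewrite !frob_r2. Qed.
Definition ph : {perm F} := perm ph_inj.
Lemma phE x : ph x = x ^+ r.
Proof. by rewrite permE. Qed.

Lemma tr_in v : tr v \in G.
Proof.
apply: memG; apply/or3P; apply: Or33; rewrite inE.
by apply/existsP; exists v; apply/forallP=> x; rewrite trE.
Qed.

Lemma sc_in u : sc u \in G.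
Proof.
apply: memG; apply/orP; left; rewrite inE.
apply/existsP; exists (unz u); rewrite unz_neq0 /=.
by apply/forallP=> x; rewrite permE.
Qed.

Lemma ph_in : ph \in G.
Proof.
apply: memG; apply/or3P; apply: Or32; rewrite inE.
by apply/forallP=> x; rewrite phE.
Qed.

Lemma aff_in u v : (sc u * tr v)%g \in G.
Proof. by rewrite groupM ?sc_in ?tr_in. Qed.

Lemma affE u v x : u != 0 -> (sc u * tr v)%g x = u * x + v.
Proof. by move=> u0; rewrite permM trE scE. Qed.

Lemma two_trans : two_transitive (G : {set {perm F}}).
Proof.
move=> x y u v xy uv.
have xy0 : x - y != 0 by rewrite subr_eq0.
have uv0 : u - v != 0 by rewrite subr_eq0.
pose a := (u - v) / (x - y).
have a0 : a != 0 by rewrite mulf_neq0 ?invr_eq0.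
exists (sc a * tr (u - a * x))%g; first exact: aff_in.
rewrite !affE //; split; first by rewrite addrC subrK.
rewrite /a; field; done.
Qed.

Lemma exists_nfix : exists t : F, t ^+ r != t.
Proof.
have [t Ht] := exists_nz (-1); exists t; apply: contra Ht => /eqP ->.
by rewrite mulN1r subrr.
Qed.

Lemma not_frob : ~ frobenius_perm (G : {set {perm F}}).
Proof.
case=> _ _ /(_ ph ph_in) H.
have [t Ht] := exists_nfix.
have ph1 : ph != 1%g.
  by apply: contra Ht => /eqP ph1; rewrite -phE ph1 perm1.
have := H ph1 0 1; rewrite !phE frob0 expr1n => /(_ erefl erefl) /eqP.
by rewrite eq_sym oner_eq0.
Qed.


Lemma h90 (be : F) (hb : be + be ^+ r != 0) (s : F) :
  s + s ^+ r = 0 -> exists w, w - w ^+ r = s.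
Proof.
move=> hs; have sr : s ^+ r = - s by apply/eqP; rewrite -addr_eq0 addrC hs.
exists (s * be ^+ r / (be + be ^+ r)).
rewrite frobM frobM frobV frobD frob_r2 sr.
move: hb; rewrite [be ^+ r + be]addrC; move: (be ^+ r) => B hb.
by field.
Qed.

Lemma conj_crit (g h x : {perm F}) : (forall z, g (h z) = h (x z)) -> g = (x ^ h)%g.
Proof. by move=> H; apply/permP => y; rewrite -(permKV h y) permJ H. Qed.

Lemma der_conj (g h : {perm F}) : derangement g -> derangement (g ^ h)%g.
Proof.
move/forallP => H; apply/forallP => y.
by rewrite -(permKV h y) permJ (inj_eq (@perm_inj _ h)) H.
Qed.


Lemma classify (be : F) (hb : be + be ^+ r != 0) (g : {perm F}) :
  g \in G -> derangement g ->
  (g \in (tr 1%R ^: G)%g) || (g \in ((ph * tr be) ^: G)%g).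
Proof.
move=> gG /forallP nfix.
have /SsetP[a [b [s [a0 Hg]]]] := subsetP G_sub g gG.
case: s Hg => /= Hg; rewrite /pw in Hg.
  have [N1|N1] := eqVneq (a * a ^+ r) 1; last first.
    exfalso; have := nfix ((a * b ^+ r + b) / (1 - a * a ^+ r)).
    rewrite Hg frobM frobV frobB frobD !frobM !frob_r2 expr1n.
    have N1' : 1 - a * a ^+ r != 0 by rewrite subr_eq0 eq_sym.
    move: N1'; rewrite [a ^+ r * a]mulrC; move: (a ^+ r) (b ^+ r) => A B N1'.
    by move/eqP; apply; field.
  have [t Ht] := exists_nz a.
  set c := t + a * t ^+ r in Ht.
  have ac : a * c ^+ r = c.
    by rewrite /c frobD frobM frob_r2 mulrDr mulrA N1 mul1r addrC.
  have cr0 : c ^+ r != 0 by rewrite frob_eq0.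
  pose e := b / c.
  have [Te0|Te0] := eqVneq (e + e ^+ r) 0.
    have [w hw] := h90 hb Te0.
    exfalso; have := nfix (c * w); rewrite Hg frobM mulrA ac.
    have -> : b = c * e by rewrite /e mulrC divfK.
    rewrite -mulrDr -hw.
    by rewrite (_ : w ^+ r + (w - w ^+ r) = w) ?eqxx // addrC subrK.
  pose la := (e + e ^+ r) / (be + be ^+ r).
  have lar : la ^+ r = la.
    by rewrite /la frobM frobV !frobD !frob_r2 [_ + e]addrC [_ + be]addrC.
  have la0 : la != 0 by rewrite mulf_neq0 ?invr_eq0.
  pose u := la * c.
  have u0 : u != 0 by rewrite mulf_neq0.
  have au : a * u ^+ r = u by rewrite /u frobM lar mulrCA ac.
  pose sv := b / u - be.
  have Tsv : sv + sv ^+ r = 0.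
    rewrite /sv frobB frobM frobV /u frobM lar /la /e frobM frobV.
    have hb' := hb; have Ht' := Ht.
    move: Te0 cr0 hb'; rewrite /e frobM frobV.
    move: (b ^+ r) (c ^+ r) (be ^+ r) => B C BE Te0 cr0 hb'.
    field; rewrite hb' cr0 Ht' /=; apply: contra Te0 => /eqP H; apply/eqP.
    have E : b / c + B / C = (b * C + B * c) / (c * C).
      by field; rewrite Ht' cr0.
    by rewrite E H mul0r.
  have [w hw] := h90 hb Tsv.
  apply/orP; right.
  suff -> : g = ((ph * tr be) ^ (sc u * tr (u * w)%R))%g by apply/memJ_class/aff_in.
  apply: conj_crit => z; rewrite !affE // permM phE trE Hg frobD (frobM u z) (frobM u w) mulrDr !mulrA au.
  have -> : w ^+ r = w - sv by rewrite -hw; ring.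
  by rewrite /sv; field.
have a1 : a = 1.
  apply/eqP; apply/negP => /negP a1; have := nfix (b / (1 - a)).
  rewrite Hg; move/eqP; apply; field.
  by rewrite subr_eq0 eq_sym.
have b0 : b != 0.
  by apply: contra (nfix 0) => /eqP b0; rewrite Hg b0 mulr0 addr0.
apply/orP; left.
suff -> : g = (tr 1%R ^ sc b)%g by apply: memJ_class; apply: sc_in.
by apply: conj_crit => z; rewrite !scE // trE Hg a1 mul1r mulrDr mulr1.
Qed.


Lemma t1_der : derangement (tr 1%R).
Proof.
by apply/forallP=> z; rewrite trE -subr_eq0 addrAC subrr add0r oner_eq0.
Qed.

Lemma d_der (be : F) (hb : be + be ^+ r != 0) : derangement (ph * tr be)%g.
Proof.
apply/forallP=> y; rewrite permM phE trE; apply/negP => /eqP E.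
have E2 := congr1 (fun x => x ^+ r) E; rewrite /= frobD frob_r2 in E2.
move/negP: hb; apply; apply/eqP.
have -> : be = y - y ^+ r by rewrite -{1}E addrAC subrr add0r.
by rewrite frobB frob_r2; ring.
Qed.

Lemma t1_ne_d (be : F) (hb : be + be ^+ r != 0) :
  (tr 1%R ^: G)%g != ((ph * tr be) ^: G)%g.
Proof.
apply/negP => /eqP E.
have : (ph * tr be)%g \in (tr 1%R ^: G)%g by rewrite E class_refl.
case/imsetP => h hG Ed.
have /SsetP[a [b' [s [a0 Hh]]]] := subsetP G_sub h hG.
have K z : (h z) ^+ r + be = h z + a * pw s 1.
  have := congr1 (fun f : {perm F} => f (h z)) Ed.
  rewrite /= permJ permM phE !trE => ->.
  by rewrite !Hh pwD mulrDr addrAC.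
have K' y : y ^+ r + be = y + a * pw s 1 by rewrite -(permKV h y) K.
have := K' 0; rewrite frob0 !add0r => Hb.
have [t Ht] := exists_nfix; apply/negP: Ht; apply/negPn/eqP.
by have := K' t; rewrite -Hb => /addIr.
Qed.

Lemma kappa2 : kappa G = 2%N.
Proof.
have [be hb] := exists_nz 1; rewrite mul1r in hb.
rewrite /kappa.
have -> : [set C in classes G | [forall g in C, derangement g]] =
          [set (tr 1%R ^: G)%g; ((ph * tr be) ^: G)%g].
  apply/setP => C; rewrite !inE; apply/andP/orP.
    case => /imsetP[x xG ->] /forallP H.
    have := H x; rewrite class_refl /= => xd.
    by case/orP: (classify hb xG xd) => /class_eqP ->; [left|right].
  have dG : (ph * tr be)%g \in G by rewrite groupM ?ph_in ?tr_in.
  have hder x : forall g, g \in (x ^: G)%g -> derangement x -> derangement g.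
    by move=> g /imsetP[h _ ->]; apply: der_conj.
  case=> /eqP ->; split; rewrite ?mem_classes ?tr_in //;
    apply/forallP => g; apply/implyP => gC; apply: hder gC _.
    exact: t1_der.
  exact: d_der.
by rewrite cards2 t1_ne_d.
Qed.

End Main.

Theorem proposition4p10 (F : finFieldType) (p k : nat)
  (hp : prime p) (hk : ~~ odd k) (hF : #|F| = (p ^ k)%N) :
  two_transitive (G_grp F p k : {set {perm F}}) /\
  ~ frobenius_perm (G_grp F p k : {set {perm F}}) /\
  kappa (G_grp F p k) = 2%N.
Proof.
split; first exact: two_trans.
split; first exact: not_frob hp hk hF.
exact: kappa2 hp hk hF.
Qed.
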